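(* Let $\mathcal R$ be the set of natural numbers $N$ satisfying Robin's inequality $\sigma(N)<e^\gamma N\log(\log N)$. Then $\mathcal R$ has natural density $1$, i.e. $\lim_{s\to\infty}\#(\mathcal R\cap\{1,\dots,s\})/s=1$.
   Context: $\sigma(N)=\sum_{d\mid N}d$ is the sum-of-divisors function and $\gamma$ is the Euler–Mascheroni constant. (For $N\le 2$, $\log\log N$ is undefined or negative and such $N$ are not in $\mathcal R$; this does not affect the density.) *)

(* Defs.v *)
From Stdlib Require Import Reals Lra Lia List Bool.
From Coquelicot Require Import Coquelicot.
Open Scope R_scope.

Definition sigma (N : nat) : R :=
  fold_right Rplus 0
    (map INR (filter (fun d => Nat.eqb (N mod d) 0) (seq 1 N))).

Definition harmonic (n : nat) : R :=
  fold_right Rplus 0 (map (fun k => / INR k) (seq 1 n)).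

Definition euler_gamma : R := real (Lim_seq (fun n => harmonic n - ln (INR n))).

(* Robin's inequality sigma(N) < e^gamma N log log N, as a boolean test.
   N <= 2 is excluded (log log N undefined/negative), as in the paper. *)
Definition robin (N : nat) : bool :=
  Nat.leb 3 N &&
  (if Rlt_dec (sigma N) (exp euler_gamma * INR N * ln (ln (INR N)))
   then true else false).

Definition robin_count (s : nat) : nat :=
  length (filter robin (seq 1 s)).

(* Main.v *)
Require Import Defs.
From Stdlib Require Import Reals.
From Coquelicot Require Import Coquelicot.
From Stdlib Require Import Lra Lia List Bool ZArith.
Open Scope R_scope.

Definition rs (f : nat -> R) (l : list nat) : R := fold_right Rplus 0 (map f l).

Lemma rs_nil f : rs f nil = 0. Proof. reflexivity. Qed.
Lemma rs_cons f a l : rs f (a :: l) = f a + rs f l. Proof. reflexivity. Qed.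

Lemma rs_app f l1 l2 : rs f (l1 ++ l2) = rs f l1 + rs f l2.
Proof. induction l1; simpl; rewrite ?rs_nil, ?rs_cons; [ring|]. rewrite IHl1; ring. Qed.

Lemma rs_le f g l : (forall x, In x l -> f x <= g x) -> rs f l <= rs g l.
Proof.
  induction l; intros H; rewrite ?rs_nil, ?rs_cons; [lra|].
  assert (f a <= g a) by (apply H; left; auto).
  assert (rs f l <= rs g l) by (apply IHl; intros; apply H; right; auto). lra.
Qed.

Lemma rs_zero l : rs (fun _ => 0) l = 0.
Proof. induction l; auto. rewrite rs_cons, IHl; ring. Qed.

Lemma rs_nonneg f l : (forall x, In x l -> 0 <= f x) -> 0 <= rs f l.
Proof.
  intros H. replace 0 with (rs (fun _ => 0) l).
  - apply rs_le; auto.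
  - apply rs_zero.
Qed.

Lemma rs_plus f g l : rs (fun x => f x + g x) l = rs f l + rs g l.
Proof. induction l; rewrite ?rs_nil, ?rs_cons; [ring|]. rewrite IHl; ring. Qed.


Lemma rs_ext f g l : (forall x, f x = g x) -> rs f l = rs g l.
Proof. intros H; induction l; auto. rewrite !rs_cons, IHl, H; auto. Qed.

Lemma rs_swap (F : nat -> nat -> R) l1 l2 :
  rs (fun x => rs (fun y => F x y) l2) l1 = rs (fun y => rs (fun x => F x y) l1) l2.
Proof.
  induction l1.
  - rewrite rs_nil. symmetry. apply rs_zero.
  - rewrite rs_cons, IHl1, <- rs_plus. apply rs_ext. intros y. rewrite rs_cons. auto.
Qed.

Lemma rs_const a l : rs (fun _ => a) l = INR (length l) * a.
Proof. induction l; simpl length; rewrite ?rs_nil, ?rs_cons; [simpl; ring|].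
  rewrite IHl, S_INR; ring. Qed.

Lemma markov (p : nat -> bool) f T l :
  (forall x, In x l -> 0 <= f x) -> (forall x, In x l -> p x = true -> T <= f x) ->
  INR (length (filter p l)) * T <= rs f l.
Proof.
  induction l; intros H1 H2; simpl filter; rewrite ?rs_nil, ?rs_cons; [simpl; lra|].
  assert (IH : INR (length (filter p l)) * T <= rs f l)
    by (apply IHl; intros; [apply H1|apply H2]; auto; right; auto).
  assert (0 <= f a) by (apply H1; left; auto).
  destruct (p a) eqn:E.
  - simpl length; rewrite S_INR. assert (T <= f a) by (apply H2; auto; left; auto). lra.
  - lra.
Qed.

Lemma sigma_rs (N : nat) : Defs.sigma N = rs (fun d => if Nat.eqb (N mod d) 0 then INR d else 0) (seq 1 N).
Proof.
  unfold Defs.sigma. generalize (seq 1 N). induction l; auto.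
  rewrite rs_cons. simpl filter. destruct (Nat.eqb (N mod a) 0); simpl; rewrite IHl; ring.
Qed.

Lemma nat_fact d s : (0 < d)%nat ->
  (d * (S s / d) = d * (s / d) + (if Nat.eqb (S s mod d) 0 then d else 0))%nat.
Proof.
  intros Hd. pose proof (Nat.div_mod s d ltac:(lia)) as E.
  pose proof (Nat.mod_upper_bound s d ltac:(lia)) as B.
  set (q := (s / d)%nat) in *. set (r := (s mod d)%nat) in *.
  destruct (Nat.eq_dec (r + 1) d) as [Hr|Hr].
  - assert (S s = d * (q + 1) + 0)%nat by lia.
    rewrite <- (Nat.div_unique (S s) d (q+1) 0) by lia.
    rewrite <- (Nat.mod_unique (S s) d (q+1) 0) by lia. simpl. lia.
  - assert (S s = d * q + (r + 1))%nat by lia.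
    rewrite <- (Nat.div_unique (S s) d q (r+1)) by lia.
    rewrite <- (Nat.mod_unique (S s) d q (r+1)) by lia.
    destruct (Nat.eqb_spec (r+1) 0); lia.
Qed.

Lemma mult_count d s : (0 < d)%nat ->
  rs (fun N => if Nat.eqb (N mod d) 0 then INR d else 0) (seq 1 s) = INR (d * (s / d)).
Proof.
  intros Hd. induction s.
  - rewrite Nat.Div0.div_0_l by lia. rewrite Nat.mul_0_r. reflexivity.
  - rewrite seq_S, rs_app, IHs, nat_fact by auto. rewrite rs_cons, rs_nil.
    replace (1 + s)%nat with (S s) by lia.
    destruct (Nat.eqb (S s mod d) 0); rewrite plus_INR; simpl; ring.
Qed.

Lemma sum_sigma s : rs Defs.sigma (seq 1 s) <= INR s * INR s.
Proof.
  set (g := fun N d => if Nat.eqb (N mod d) 0 then INR d else 0).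
  assert (Hg : forall N d, 0 <= g N d).
  { intros; unfold g; destruct (Nat.eqb _ _); [apply pos_INR|lra]. }
  apply Rle_trans with (rs (fun N => rs (fun d => g N d) (seq 1 s)) (seq 1 s)).
  - apply rs_le. intros N HN. apply in_seq in HN. rewrite sigma_rs.
    assert (Es : seq 1 s = seq 1 N ++ seq (1 + N) (s - N)) by (rewrite <- seq_app; f_equal; lia).
    rewrite Es, rs_app.
    assert (0 <= rs (fun d => g N d) (seq (1 + N) (s - N))) by (apply rs_nonneg; auto).
    unfold g in *; lra.
  - rewrite rs_swap.
    apply Rle_trans with (rs (fun _ => INR s) (seq 1 s)).
    + apply rs_le. intros d Hd. apply in_seq in Hd. unfold g.
      rewrite mult_count by lia. apply le_INR. apply Nat.Div0.mul_div_le.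
    + rewrite rs_const, length_seq. lra.
Qed.

Lemma len4 (p1 p2 p3 p4 : nat -> bool) l :
  (forall x, In x l -> p1 x || p2 x || p3 x || p4 x = true) ->
  (length l <= length (filter p1 l) + length (filter p2 l) + length (filter p3 l)
     + length (filter p4 l))%nat.
Proof.
  induction l; intros H; simpl; auto.
  assert (IH := IHl (fun x Hx => H x (or_intror Hx))).
  specialize (H a (or_introl eq_refl)).
  destruct (p1 a), (p2 a), (p3 a), (p4 a); simpl in *; lia.
Qed.

Lemma count_le_bound (p : nat -> bool) s M :
  (forall x, p x = true -> (x <= M)%nat) -> (length (filter p (seq 1 s)) <= M)%nat.
Proof.
  intros H. rewrite <- (length_seq M 1) at 1.
  apply NoDup_incl_length.
  - apply NoDup_filter, seq_NoDup.
  - intros x Hx. apply filter_In in Hx as [Hx Px]. apply in_seq in Hx.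
    apply in_seq. specialize (H x Px). lia.
Qed.

Lemma arch r : exists n : nat, r < INR n.
Proof.
  destruct (archimed r) as [H _].
  exists (Z.to_nat (up r)).
  destruct (Z_le_gt_dec 0 (up r)).
  - rewrite INR_IZR_INZ, Z2Nat.id; auto.
  - assert (IZR (up r) < 0) by (apply IZR_lt; lia). pose proof (pos_INR (Z.to_nat (up r))). lra.
Qed.

Lemma robin_count_le s : (robin_count s <= s)%nat.
Proof. unfold robin_count. rewrite <- (length_seq s 1) at 2. apply filter_length_le. Qed.

Theorem mainTheorem6 :
  is_lim_seq (fun s : nat => INR (robin_count s) / INR s) 1.
Proof.
  apply is_lim_seq_spec. intros eps. pose proof (cond_pos eps) as Heps.
  set (eg := exp euler_gamma). assert (Heg : 0 < eg) by apply exp_pos.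
  destruct (arch (3 / eps)) as [K HK].
  assert (HK0 : 0 < INR K) by (assert (0 < 3/eps) by (apply Rdiv_lt_0_compat; lra); lra).
  set (L := 3 * INR K / (eps * eg)).
  assert (HL : 0 < L) by (unfold L; apply Rdiv_lt_0_compat; [lra| apply Rmult_lt_0_compat; lra]).
  destruct (arch (exp (exp L))) as [M HM].
  assert (HMpos : 0 < INR M) by (pose proof (exp_pos (exp L)); lra).
  assert (HlnM : exp L < ln (INR M)).
  { rewrite <- (ln_exp (exp L)). apply ln_increasing; auto. apply exp_pos. }
  assert (HlnlnM : L < ln (ln (INR M))).
  { rewrite <- (ln_exp L). apply ln_increasing; auto. apply exp_pos. }
  set (c := eg * ln (ln (INR M))).
  assert (Hc : eg * L < c) by (unfold c; apply Rmult_lt_compat_l; auto).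
  destruct (arch (3 * INR M / eps)) as [S0 HS0].
  exists (S (S0 + M)). intros s Hs.
  assert (Hspos : 0 < INR s) by (apply lt_0_INR; lia).
  assert (HsS0 : INR S0 <= INR s) by (apply le_INR; lia).
  set (p1 := robin).
  set (p2 := fun N => Nat.leb N M).
  set (p3 := fun N => Nat.leb (K * N) s).
  set (p4 := fun N => negb (robin N) && negb (Nat.leb N M) && negb (Nat.leb (K * N) s)).
  assert (Hsplit := len4 p1 p2 p3 p4 (seq 1 s)
    ltac:(intros x _; unfold p1,p2,p3,p4; destruct (robin x), (Nat.leb x M), (Nat.leb (K*x) s); reflexivity)).
  rewrite length_seq in Hsplit.
  assert (H2 : (length (filter p2 (seq 1 s)) <= M)%nat).
  { apply count_le_bound. intros x Hx. unfold p2 in Hx. apply Nat.leb_le in Hx; auto. }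
  assert (HK1 : (0 < K)%nat) by (apply INR_lt; simpl; lra).
  assert (H3 : (K * length (filter p3 (seq 1 s)) <= s)%nat).
  { assert (length (filter p3 (seq 1 s)) <= s / K)%nat.
    { apply count_le_bound. intros x Hx. unfold p3 in Hx. apply Nat.leb_le in Hx.
      apply Nat.div_le_lower_bound; lia. }
    pose proof (Nat.Div0.mul_div_le s K). nia. }
  set (n4 := length (filter p4 (seq 1 s))).
  assert (H4 : INR n4 * (c * INR s / INR K) <= INR s * INR s).
  { eapply Rle_trans; [|apply sum_sigma]. apply markov.
    - intros x _. rewrite sigma_rs. apply rs_nonneg. intros d _.
      destruct (Nat.eqb _ _); [apply pos_INR|lra].
    - intros x Hx Px. apply in_seq in Hx. unfold p4 in Px.
      apply andb_prop in Px as [Px P3]. apply andb_prop in Px as [P1 P2].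
      apply negb_true_iff in P1, P2, P3. apply Nat.leb_gt in P2, P3.
      assert (HxM : INR M < INR x) by (apply lt_INR; lia).
      assert (Hxs : INR s < INR K * INR x) by (rewrite <- mult_INR; apply lt_INR; lia).
      assert (Hlnx : ln (ln (INR M)) <= ln (ln (INR x))).
      { apply Rlt_le, ln_increasing; [pose proof (exp_pos (exp L)); pose proof (exp_pos L); lra|]. apply ln_increasing; lra. }
      unfold robin in P1. replace (Nat.leb 3 x) with true in P1.
      2:{ symmetry. apply Nat.leb_le. assert (2 < INR x). 
          { assert (1 < exp L) by (pose proof (exp_ineq1 L ltac:(lra)); lra).
            assert (1 + exp L < exp (exp L)) by (apply exp_ineq1; lra).
            lra. }
          assert (2 < x)%nat by (apply INR_lt; simpl; lra). lia. }
      destruct (Rlt_dec _ _) as [_|Hn]; [discriminate|]. apply Rnot_lt_le in Hn.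
      fold eg in Hn.
      assert (c * INR s / INR K <= c * INR x).
      { unfold Rdiv. apply Rmult_le_reg_r with (INR K); auto.
        rewrite Rmult_assoc, Rinv_l by lra. assert (0 < c) by nra. nra. }
      assert (c * INR x <= eg * INR x * ln (ln (INR x))).
      { unfold c. assert (0 <= eg * INR x) by (assert (0 < INR x) by lra; nra).
        replace (eg * ln (ln (INR M)) * INR x) with (eg * INR x * ln (ln (INR M))) by ring.
        apply Rmult_le_compat_l; auto. }
      lra. }
  assert (Hc0 : 0 < c) by (assert (0 < eg * L) by (apply Rmult_lt_0_compat; lra); lra).
  assert (Hcs : 0 < c * INR s / INR K) by (apply Rdiv_lt_0_compat; [apply Rmult_lt_0_compat|]; lra).
  assert (H4' : INR n4 <= INR s * INR K / c).
  { apply Rmult_le_reg_r with (c * INR s / INR K); auto.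
    replace (INR s * INR K / c * (c * INR s / INR K)) with (INR s * INR s)
      by (field; split; nra). auto. }
  assert (Hrc := robin_count_le s).
  assert (Hsum : INR s <= INR (robin_count s) + INR M + INR s / INR K + INR n4).
  { unfold robin_count. fold p1.
    apply le_INR in Hsplit. apply le_INR in H2. apply le_INR in H3.
    rewrite !plus_INR in Hsplit. rewrite mult_INR in H3.
    assert (INR (length (filter p3 (seq 1 s))) <= INR s / INR K).
    { apply Rmult_le_reg_l with (INR K); auto. field_simplify; lra. }
    fold n4 in Hsplit. lra. }
  assert (A1 : INR M / INR s < eps / 3).
  { assert (T : 3 * INR M / eps * eps < INR s * eps) by (apply Rmult_lt_compat_r; lra).
    replace (3 * INR M / eps * eps) with (3 * INR M) in T by (field; lra).
    apply Rmult_lt_reg_r with (3 * INR s); [lra|].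
    replace (INR M / INR s * (3 * INR s)) with (3 * INR M) by (field; lra).
    replace (eps / 3 * (3 * INR s)) with (INR s * eps) by (field; lra). lra. }
  assert (A2 : 1 / INR K < eps / 3).
  { apply Rmult_lt_reg_r with (INR K * 3 / eps). apply Rdiv_lt_0_compat; lra.
    replace (1 / INR K * (INR K * 3 / eps)) with (3 / eps) by (field; lra).
    replace (eps / 3 * (INR K * 3 / eps)) with (INR K) by (field; lra). lra. }
  assert (A3 : INR K / c < eps / 3).
  { assert (0 < c) by nra.
    apply Rmult_lt_reg_r with (3 * c / eps). apply Rdiv_lt_0_compat; lra.
    replace (INR K / c * (3 * c / eps)) with (3 * INR K / eps) by (field; lra).
    replace (eps / 3 * (3 * c / eps)) with c by (field; lra).
    unfold L in Hc. replace (eg * (3 * INR K / (eps * eg))) with (3 * INR K / eps) in Hc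
      by (field; lra). lra. }
  assert (Hratio : 1 - eps < INR (robin_count s) / INR s).
  { apply Rmult_lt_reg_r with (INR s); auto.
    replace (INR (robin_count s) / INR s * INR s) with (INR (robin_count s)) by (field; lra).
    assert (INR M < eps / 3 * INR s).
    { apply Rmult_lt_reg_r with (/ INR s). apply Rinv_0_lt_compat; auto.
      replace (eps / 3 * INR s * / INR s) with (eps / 3) by (field; lra). exact A1. }
    assert (INR s / INR K < eps / 3 * INR s).
    { replace (INR s / INR K) with (1 / INR K * INR s) by (field; lra). nra. }
    assert (INR s * INR K / c < eps / 3 * INR s).
    { replace (INR s * INR K / c) with (INR K / c * INR s) by (field; nra). nra. }
    lra. }
  assert (Hle1 : INR (robin_count s) / INR s <= 1).
  { apply le_INR in Hrc. apply Rmult_le_reg_r with (INR s); auto.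
    replace (INR (robin_count s) / INR s * INR s) with (INR (robin_count s)) by (field; lra). lra. }
  apply Rabs_def1; lra.
Qed.
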